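(* Let $\mathcal{Q}_{\mathrm{pri}}$ be the set of isomorphism classes of prime quandles. There is a surjective ring homomorphism $$\mathbb{Z}[\mathcal{Q}_{\mathrm{pri}}]\longrightarrow\mathrm{B}(\mathcal{Q})$$ from the polynomial ring over $\mathbb{Z}$ with variables indexed by $\mathcal{Q}_{\mathrm{pri}}$ onto the Burnside ring of finite quandles, sending the variable $[P]$ to $b(P)$.
   Context: A rack is a set $R$ with a binary operation $\rhd$ such that every left multiplication $\ell_a\colon b\mapsto a\rhd b$ is a bijection and $a\rhd(b\rhd c)=(a\rhd b)\rhd(a\rhd c)$ for all $a,b,c$; a quandle is a rack with $a\rhd a=a$ for all $a$. Products are cartesian products with componentwise operation. The inner automorphism group $\mathrm{Inn}(R)$ is the subgroup of the symmetric group on $R$ generated by all $\ell_a$; a rack is connected if it is non-empty and $\mathrm{Inn}(R)$ acts transitively on $R$. A prime quandle is a finite connected quandle that is not a singleton and that is isomorphic to a product $A\times B$ of two quandles only when one of $A,B$ is a singleton. A subrack of $R$ is a subset $S$ with $\ell_s(S)=S$ for all $s\in S$; a decomposition of $R$ into $S$ and $T$ means $S,T$ are disjoint subracks (possibly empty) with $S\cup T=R$. The Burnside ring of finite quandles $\mathrm{B}(\mathcal{Q})$ is the abelian group generated by symbols $b(Q)$, one for each finite quandle $Q$, subject to $b(Q_1)=b(Q_2)$ whenever $Q_1\cong Q_2$ and $b(Q)=b(S)+b(T)$ whenever $Q$ decomposes into $S$ and $T$; it is a commutative ring with $b(Q)b(Q')=b(Q\times Q')$ and unit the class of the singleton. 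*)

(* Defs.v *)
From HB Require Import structures.
From mathcomp Require Import all_boot all_fingroup all_algebra.
From mathcomp Require Import finmap.
From mathcomp.multinomials Require Import monalg.
From Stdlib Require Import ClassicalEpsilon.

Set Implicit Arguments.
Unset Strict Implicit.
Unset Printing Implicit Defensive.

Import GRing.Theory.
Local Open Scope ring_scope.

Definition asb (P : Prop) : bool :=
  if excluded_middle_informative P then true else false.

Lemma asbP (P : Prop) : reflect P (asb P).
Proof. by rewrite /asb; case: excluded_middle_informative => h; constructor. Qed.

(* A finite binary structure, coded on the carrier 'I_n. *)
Definition code := {n : nat & {ffun 'I_n * 'I_n -> 'I_n}}.
Definition csize (c : code) : nat := tag c.
Definition cop (c : code) (x y : 'I_(csize c)) : 'I_(csize c) := tagged c (x, y).
Arguments cop : clear implicits.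

Definition is_quandle (c : code) : Prop :=
  [/\ (forall a, bijective (cop c a)),
      (forall a b d, cop c a (cop c b d) = cop c (cop c a b) (cop c a d))
    & (forall a, cop c a a = a)].

(* finite quandles (every finite quandle is isomorphic to one of these) *)
Definition fq := {c : code | asb (is_quandle c)}.
Definition qsize (Q : fq) : nat := csize (val Q).
Definition qop (Q : fq) : 'I_(qsize Q) -> 'I_(qsize Q) -> 'I_(qsize Q) :=
  cop (val Q).
Arguments qop : clear implicits.

Lemma fq_quandle (Q : fq) : is_quandle (val Q).
Proof. exact/asbP/(valP Q). Qed.

Lemma qop_inj (Q : fq) a : injective (qop Q a).
Proof. by case: (fq_quandle Q) => /(_ a) /bij_inj. Qed.

Definition qiso (Q R : fq) : Prop :=
  exists f : 'I_(qsize Q) -> 'I_(qsize R),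
    bijective f /\ forall a b, f (qop Q a b) = qop R (f a) (f b).

Definition qiso_prod (P A B : fq) : Prop :=
  exists f : 'I_(qsize P) -> 'I_(qsize A) * 'I_(qsize B),
    bijective f /\ forall a b,
      f (qop P a b) = (qop A (f a).1 (f b).1, qop B (f a).2 (f b).2).

Definition subrack (Q : fq) (S : {set 'I_(qsize Q)}) : Prop :=
  forall s, s \in S -> qop Q s @: S = S.

Definition iso_sub (S Q : fq) (A : {set 'I_(qsize Q)}) : Prop :=
  exists f : 'I_(qsize S) -> 'I_(qsize Q),
    [/\ injective f, f @: [set: 'I_(qsize S)] = A
      & forall a b, f (qop S a b) = qop Q (f a) (f b)].

Definition decomp (Q S T : fq) : Prop :=
  exists A B : {set 'I_(qsize Q)},
    [/\ subrack A, subrack B, [disjoint A & B] & A :|: B = setT] /\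
    iso_sub S A /\ iso_sub T B.

Definition pt_code : code := existT _ 1%N [ffun _ => ord0].
Lemma ord1_eq (x y : 'I_1) : x = y.
Proof. by rewrite (ord1 x) (ord1 y). Qed.
Lemma pt_quandle : asb (is_quandle pt_code).
Proof.
apply/asbP; split.
- by move=> a; exists id => x; apply: ord1_eq.
- by move=> a b d; apply: ord1_eq.
- by move=> a; apply: ord1_eq.
Qed.
Definition qpt : fq := exist _ pt_code pt_quandle.

Lemma card_pair n m : #|{: 'I_n * 'I_m}| = (n * m)%N.
Proof. by rewrite card_prod !card_ord. Qed.
Definition pidx n m (p : 'I_n * 'I_m) : 'I_(n * m) :=
  cast_ord (card_pair n m) (enum_rank p).
Definition pinv n m (k : 'I_(n * m)) : 'I_n * 'I_m :=
  enum_val (cast_ord (esym (card_pair n m)) k).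
Definition prod_code (Q R : code) : code :=
  existT _ (csize Q * csize R)%N
    [ffun p : 'I_(csize Q * csize R) * 'I_(csize Q * csize R) =>
       let x := pinv p.1 in let y := pinv p.2 in
       pidx (cop Q x.1 y.1, cop R x.2 y.2)].
(* Q x R (the default branch is never taken: products of quandles are quandles) *)
Definition qprod (Q R : fq) : fq := insubd Q (prod_code (val Q) (val R)).

Definition lperm (Q : fq) (a : 'I_(qsize Q)) : {perm 'I_(qsize Q)} :=
  perm (@qop_inj Q a).
Definition Inn (Q : fq) : {set {perm 'I_(qsize Q)}} :=
  generated [set lperm a | a : 'I_(qsize Q)].
Definition connected (Q : fq) : Prop :=
  (0 < qsize Q)%N /\
  forall x y : 'I_(qsize Q), exists2 g, g \in Inn Q & g x = y.

Definition is_prime (P : fq) : Prop :=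
  [/\ connected P, qsize P <> 1%N &
      forall A B : fq, qiso_prod P A B -> qsize A = 1%N \/ qsize B = 1%N].

(* Q_pri: isomorphism classes of prime quandles, each represented by the
   member of the class with least code (pickle). *)
Definition Qpri := {P : fq | asb (is_prime P /\
                       forall P' : fq, qiso P P' -> (choice.pickle P <= choice.pickle P')%N)}.

Notation ZQpri := {malg int[{cmonom Qpri}]}.
Definition var (i : Qpri) : ZQpri := @mkmalgU _ int (ucm i) 1.

(* Burnside ring: free abelian group on finite quandles modulo relations *)
Notation FB := {malg int[fq]}.
Definition bsym (Q : fq) : FB := @mkmalgU _ int Q 1.

Definition bgen (x : FB) : Prop :=
  (exists Q R, qiso Q R /\ x = bsym Q - bsym R) \/
  (exists Q S T, decomp Q S T /\ x = bsym Q - bsym S - bsym T).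

Definition brel (x : FB) : Prop :=
  forall P : FB -> Prop, P 0 -> (forall y z, P y -> P z -> P (y - z)) ->
    (forall g, bgen g -> P g) -> P x.

(* equality in B(Q) of the classes of two formal combinations *)
Definition beq (x y : FB) : Prop := brel (x - y).

(* multiplication on formal combinations: b(Q) b(Q') = b(Q x Q') *)
Definition bmul (x y : FB) : FB :=
  \sum_(a <- msupp x) \sum_(b <- msupp y) @mkmalgU _ int (qprod a b) (x@_a * y@_b).

(* Main.v *)
Require Import Defs.
From HB Require Import structures.
From mathcomp Require Import all_boot all_fingroup all_algebra.
From mathcomp Require Import finmap.
From mathcomp.multinomials Require Import monalg.
Set Implicit Arguments.
Unset Strict Implicit.
Unset Printing Implicit Defensive.
Import GRing.Theory.
Local Open Scope ring_scope.

Definition isoT (T U : Type) (opT : T -> T -> T) (opU : U -> U -> U) :=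
  exists f : T -> U, bijective f /\ forall a b, f (opT a b) = opU (f a) (f b).

Definition pop (T U : Type) (oT : T -> T -> T) (oU : U -> U -> U) (x y : T * U) :=
  (oT x.1 y.1, oU x.2 y.2).

Definition qax (T : Type) (op : T -> T -> T) : Prop :=
  [/\ (forall a, bijective (op a)),
      (forall a b d, op a (op b d) = op (op a b) (op a d))
    & (forall a, op a a = a)].

Lemma isoT_refl T (o : T -> T -> T) : isoT o o.
Proof. by exists id; split=> //; exists id. Qed.

Lemma isoT_sym T U (o : T -> T -> T) (o' : U -> U -> U) : isoT o o' -> isoT o' o.
Proof.
case=> f [[g fK gK] hf]; exists g; split; first by exists f.
by move=> a b; apply: (can_inj fK); rewrite hf !gK.
Qed.

Lemma isoT_trans T U V (o : T -> T -> T) (o' : U -> U -> U) (o'' : V -> V -> V) :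
  isoT o o' -> isoT o' o'' -> isoT o o''.
Proof.
case=> f [bf hf] [g [bg hg]]; exists (g \o f); split; first exact: bij_comp.
by move=> a b /=; rewrite hf hg.
Qed.

Lemma isoT_prod T T' U U' (oA : T -> T -> T) (oA' : T' -> T' -> T')
  (oB : U -> U -> U) (oB' : U' -> U' -> U') :
  isoT oA oA' -> isoT oB oB' -> isoT (pop oA oB) (pop oA' oB').
Proof.
case=> f [[f' fK f'K] hf] [g [[g' gK g'K] hg]].
exists (fun x => (f x.1, g x.2)); split.
  by exists (fun x => (f' x.1, g' x.2)) => [[a b]|[a b]] /=; rewrite ?fK ?gK ?f'K ?g'K.
by move=> a b; rewrite /pop /= hf hg.
Qed.

Lemma isoT_assoc T U V (oA : T -> T -> T) (oB : U -> U -> U) (oC : V -> V -> V) :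
  isoT (pop (pop oA oB) oC) (pop oA (pop oB oC)).
Proof.
exists (fun x => (x.1.1, (x.1.2, x.2))); split => //.
by exists (fun x => ((x.1, x.2.1), x.2.2)) => [[[a b] c]|[a [b c]]].
Qed.

Lemma isoT_comm T U (oA : T -> T -> T) (oB : U -> U -> U) :
  isoT (pop oA oB) (pop oB oA).
Proof.
exists (fun x => (x.2, x.1)); split => //.
by exists (fun x => (x.2, x.1)) => [[a b]|[a b]].
Qed.

Lemma isoT_unit T (oA : T -> T -> T) : isoT (pop oA (qop qpt)) oA.
Proof.
exists (fun x => x.1); split => //.
exists (fun a => (a, ord0)) => [[a b]|a] //=.
by rewrite (ord1_eq b ord0).
Qed.

Lemma qax_iso T U (o : T -> T -> T) (o' : U -> U -> U) :
  isoT o o' -> qax o' -> qax o.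
Proof.
case=> f [[g fK gK] hf] [bij dist idem]; split.
- move=> a; have e : (g \o (o' (f a) \o f)) =1 o a.
    by move=> x /=; rewrite -hf fK.
  apply: eq_bij e; apply: bij_comp; first by exists f.
  by apply: bij_comp => //; exists g.
- by move=> a b d; apply: (can_inj fK); rewrite !hf dist.
- by move=> a; apply: (can_inj fK); rewrite hf idem.
Qed.

Lemma qax_pop T U (oA : T -> T -> T) (oB : U -> U -> U) :
  qax oA -> qax oB -> qax (pop oA oB).
Proof.
case=> bA dA iA [bB dB iB]; split.
- move=> [a1 a2]; case: (bA a1) => g1 K1 K1'; case: (bB a2) => g2 K2 K2'.
  exists (fun x => (g1 x.1, g2 x.2)) => [[x1 x2]|[x1 x2]];
  by rewrite /pop /= ?K1 ?K2 ?K1' ?K2'.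
- by move=> a b d; rewrite /pop /= dA dB.
- by move=> [a1 a2]; rewrite /pop /= iA iB.
Qed.

Lemma fq_qax (Q : fq) : qax (qop Q).
Proof. exact: fq_quandle. Qed.

Lemma val_iso (Q : fq) (c : code) : val Q = c -> isoT (qop Q) (cop c).
Proof. by case: Q => c0 h /= e; subst c; apply: isoT_refl. Qed.

Lemma pidxK n m : cancel (@pidx n m) (@pinv n m).
Proof. by move=> p; rewrite /pinv /pidx cast_ordK enum_rankK. Qed.
Lemma pinvK n m : cancel (@pinv n m) (@pidx n m).
Proof. by move=> k; rewrite /pinv /pidx enum_valK cast_ordKV. Qed.

Lemma prod_code_iso (c d : code) :
  isoT (cop (prod_code c d)) (pop (cop c) (cop d)).
Proof.
exists (@pinv _ _); split; first by exists (@pidx _ _); [apply: pinvK|apply: pidxK].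
by move=> a b; rewrite /cop /= ffunE /= pidxK.
Qed.

Lemma qprodP (Q R : fq) : isoT (qop (qprod Q R)) (pop (qop Q) (qop R)).
Proof.
have hq : asb (is_quandle (prod_code (val Q) (val R))).
  apply/asbP; apply: (qax_iso (prod_code_iso _ _)).
  exact: qax_pop (fq_qax Q) (fq_qax R).
apply: isoT_trans (prod_code_iso _ _).
by apply: val_iso; rewrite /qprod insubdK.
Qed.

Lemma qiso_refl Q : qiso Q Q. Proof. exact: isoT_refl. Qed.
Lemma qiso_sym Q R : qiso Q R -> qiso R Q. Proof. exact: isoT_sym. Qed.
Lemma qiso_trans Q R S : qiso Q R -> qiso R S -> qiso Q S.
Proof. exact: isoT_trans. Qed.

Lemma qprod_cong A A' B B' : qiso A A' -> qiso B B' -> qiso (qprod A B) (qprod A' B').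
Proof.
move=> hA hB; apply: isoT_trans (qprodP _ _) _.
apply: isoT_trans (isoT_sym (qprodP _ _)).
exact: isoT_prod.
Qed.

Lemma qprod_assoc A B C : qiso (qprod (qprod A B) C) (qprod A (qprod B C)).
Proof.
apply: isoT_trans (qprodP _ _) _.
apply: isoT_trans (isoT_prod (qprodP _ _) (isoT_refl _)) _.
apply: isoT_trans (isoT_assoc _ _ _) _.
apply: isoT_trans (isoT_sym (qprodP _ _)).
exact: isoT_prod (isoT_refl _) (isoT_sym (qprodP _ _)).
Qed.

Lemma qprod_comm A B : qiso (qprod A B) (qprod B A).
Proof.
apply: isoT_trans (qprodP _ _) _.
apply: isoT_trans (isoT_comm _ _) _.
exact: isoT_sym (qprodP _ _).
Qed.

Lemma qprod_unit A : qiso (qprod A qpt) A.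
Proof. exact: isoT_trans (qprodP _ _) (isoT_unit _). Qed.

Lemma qprod_swap A B C : qiso (qprod A (qprod B C)) (qprod B (qprod A C)).
Proof.
apply: qiso_trans (qiso_sym (qprod_assoc _ _ _)) _.
apply: qiso_trans (qprod_cong (qprod_comm _ _) (qiso_refl _)) _.
exact: qprod_assoc.
Qed.

Definition F (s : seq Qpri) : fq := foldr (fun i acc => qprod (val i) acc) qpt s.

Lemma F_cat s t : qiso (F (s ++ t)) (qprod (F s) (F t)).
Proof.
elim: s => [|x s IH] /=.
  apply: qiso_trans (qiso_sym (qprod_unit _)) _; exact: qprod_comm.
apply: qiso_trans (qprod_cong (qiso_refl _) IH) _.
exact: qiso_sym (qprod_assoc _ _ _).
Qed.

Lemma F_rem (x : Qpri) t : x \in t -> qiso (F t) (qprod (val x) (F (rem x t))).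
Proof.
elim: t => [|y t IH] //=; rewrite in_cons eq_sym; case: eqP => [-> _|ne /= xt].
  exact: qiso_refl.
apply: qiso_trans (qprod_cong (qiso_refl _) (IH xt)) _.
exact: qprod_swap.
Qed.

Lemma F_perm s t : perm_eq s t -> qiso (F s) (F t).
Proof.
elim: s t => [|x s IH] t.
  by rewrite perm_sym => /perm_nilP ->; exact: qiso_refl.
move=> pst; have xt : x \in t by rewrite -(perm_mem pst) mem_head.
apply: qiso_trans (qiso_sym (F_rem xt)); rewrite /=.
apply: qprod_cong (qiso_refl _) (IH _ _).
by rewrite -(perm_cons x); apply: perm_trans pst (perm_to_rem xt).
Qed.

Lemma conn_surj (P A : fq) (f : 'I_(qsize P) -> 'I_(qsize A)) :
  (forall a b, f (qop P a b) = qop A (f a) (f b)) -> (forall a, exists x, f x = a) ->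
  connected P -> connected A.
Proof.
move=> hf sf [n0 tr]; split.
  exact: leq_ltn_trans (leq0n _) (ltn_ord (f (Ordinal n0))).
move=> a a'; case: (sf a) => x <-; case: (sf a') => x' <-.
case: (tr x x') => g gI <-.
move: gI; rewrite /Inn => /gen_prodgP [n [c cS ->]].
suff [g' g'I hg'] : exists2 g', g' \in Inn A & forall z, f ((\prod_i c i)%g z) = g' (f z).
  by exists g' => //; rewrite hg'.
elim: n c cS => [|n IH] c cS.
  by exists 1%g; [rewrite /Inn group1 | move=> z; rewrite big_ord0 !perm1].
rewrite big_ord_recr /=.
have [g' g'I hg'] := IH (fun i => c (widen_ord (leqnSn n) i)) (fun i => cS _).
have /imsetP [b _ cb] := cS ord_max.
exists (g' * lperm (f b))%g.
  by move: g'I; rewrite /Inn => g'I; rewrite groupM // mem_gen // imset_f.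
by move=> z; rewrite !permM cb /lperm !permE hf hg'.
Qed.

Lemma qiso_size Q R : qiso Q R -> qsize Q = qsize R.
Proof. by case=> f [bf _]; have := bij_eq_card bf; rewrite !card_ord. Qed.

Lemma qiso_prod_size P A B : qiso_prod P A B -> qsize P = (qsize A * qsize B)%N.
Proof. by case=> f [bf _]; have := bij_eq_card bf; rewrite card_prod !card_ord. Qed.

Lemma conn_iso Q R : qiso Q R -> connected Q -> connected R.
Proof.
case=> f [[g fK gK] hf]; apply: (conn_surj hf) => a; by exists (g a).
Qed.

Lemma prime_iso Q R : is_prime Q -> qiso Q R -> is_prime R.
Proof.
case=> cQ sQ pQ iQR; split.
- exact: conn_iso iQR cQ.
- by rewrite -(qiso_size iQR).
- move=> A B hR; apply: (pQ A B).
  have h2 : isoT (qop R) (pop (qop A) (qop B)) by exact: hR.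
  have := isoT_trans iQR h2; case=> f [bf hf]; exists f; split => // a b; exact: hf.
Qed.

Lemma rep_ex Q : is_prime Q -> exists i : Qpri, qiso Q (val i).
Proof.
move=> pQ.
pose Pn n := asb (exists P', qiso Q P' /\ choice.pickle P' = n).
have exP : exists n, Pn n.
  by exists (choice.pickle Q); apply/asbP; exists Q; split => //; exact: qiso_refl.
case: (ex_minnP exP) => m /asbP [P0 [iso0 pk]] minm.
have hP0 : asb (is_prime P0 /\ forall P' : fq, qiso P0 P' ->
                   (choice.pickle P0 <= choice.pickle P')%N).
  apply/asbP; split; first exact: prime_iso iso0.
  move=> P' i'; rewrite pk; apply: minm; apply/asbP; exists P'; split => //.
  exact: qiso_trans i'.
by exists (exist _ P0 hP0).
Qed.

Lemma prod_conn P A B : qiso_prod P A B -> connected P -> connected A /\ connected B.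
Proof.
case=> h [[h' hK h'K] hh] cP; have x0 : 'I_(qsize P) := Ordinal (proj1 cP).
split.
- apply: (conn_surj (f := fun z => (h z).1)) cP; first by move=> a b; rewrite hh.
  by move=> a; exists (h' (a, (h x0).2)); rewrite h'K.
- apply: (conn_surj (f := fun z => (h z).2)) cP; first by move=> a b; rewrite hh.
  by move=> a; exists (h' ((h x0).1, a)); rewrite h'K.
Qed.

Lemma conn_F n : forall Q, (qsize Q <= n)%N -> connected Q -> exists s, qiso Q (F s).
Proof.
elim: n => [|n IH] Q leQ cQ.
  by case: cQ => /leq_trans/(_ leQ).
have [e1|ne1] := eqVneq (qsize Q) 1%N.
  exists [::] => /=.
  have x0 : 'I_(qsize Q) := Ordinal (proj1 cQ).
  exists (fun _ => ord0); split; last by move=> a b; apply: ord1_eq.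
  exists (fun _ => x0); last by move=> y; apply: ord1_eq.
  move=> x; apply: val_inj.
  have hx : (val x < 1)%N by rewrite -e1; exact: ltn_ord.
  have hx0 : (val x0 < 1)%N by rewrite -e1; exact: ltn_ord.
  by move: hx hx0; rewrite !ltnS !leqn0 => /eqP -> /eqP ->.
case: (asbP (is_prime Q)) => [pQ|npQ].
  have [i hi] := rep_ex pQ; exists [:: i]; rewrite /=.
  exact: qiso_trans hi (qiso_sym (qprod_unit _)).
have [A [B [hAB [nA nB]]]] :
    exists A B, qiso_prod Q A B /\ qsize A <> 1%N /\ qsize B <> 1%N.
  case: (asbP (exists A B, qiso_prod Q A B /\ qsize A <> 1%N /\ qsize B <> 1%N)) => // H.
  exfalso; apply: npQ; split => //; first exact/eqP.
  move=> A B hAB; case: (eqVneq (qsize A) 1%N) => [|nA]; first by left.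
  case: (eqVneq (qsize B) 1%N) => [|nB]; first by right.
  by exfalso; apply: H; exists A, B; split => //; split; apply/eqP.
have [cA cB] := prod_conn hAB cQ.
have sz := qiso_prod_size hAB.
have A2 : (1 < qsize A)%N by move: (proj1 cA) nA; case: (qsize A) => // -[].
have B2 : (1 < qsize B)%N by move: (proj1 cB) nB; case: (qsize B) => // -[].
have ltA : (qsize A < qsize Q)%N by rewrite sz ltn_Pmulr // ltnW.
have ltB : (qsize B < qsize Q)%N by rewrite sz ltn_Pmull // ltnW.
have [sA hA] := IH A (ltnSE (leq_trans ltA leQ)) cA.
have [sB hB] := IH B (ltnSE (leq_trans ltB leQ)) cB.
exists (sA ++ sB).
apply: qiso_trans (qiso_sym (F_cat sA sB)).
apply: qiso_trans (qprod_cong hA hB).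
have h2 : isoT (qop Q) (pop (qop A) (qop B)) by exact: hAB.
exact: isoT_trans h2 (isoT_sym (qprodP _ _)).
Qed.

Definition code_of (T : finType) (op : T -> T -> T) : code :=
  existT _ #|T| [ffun p : 'I_#|T| * 'I_#|T| => enum_rank (op (enum_val p.1) (enum_val p.2))].

Lemma code_ofE (T : finType) (op : T -> T -> T) i j :
  cop (code_of op) i j = enum_rank (op (enum_val i) (enum_val j)).
Proof. by rewrite /cop /= ffunE. Qed.

Lemma code_of_iso (T : finType) (op : T -> T -> T) : isoT (cop (code_of op)) op.
Proof.
exists enum_val; split; first by exists enum_rank; [apply: enum_valK|apply: enum_rankK].
by move=> a b; rewrite code_ofE enum_rankK.
Qed.

Definition fq_of (T : finType) (op : T -> T -> T) (h : qax op) : fq :=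
  exist _ (code_of op) (introT (asbP _) (qax_iso (code_of_iso op) h)).

Section Sub.
Variables (Q : fq) (A : {set 'I_(qsize Q)}).
Hypothesis hA : forall x y, x \in A -> y \in A -> qop Q x y \in A.

Definition sT := {x : 'I_(qsize Q) | x \in A}.
Definition sop (x y : sT) : sT := insubd x (qop Q (val x) (val y)).
Lemma sopE x y : val (sop x y) = qop Q (val x) (val y).
Proof. by rewrite /sop insubdK //; apply: hA; [exact: (valP x)|exact: (valP y)]. Qed.

Lemma sop_qax : qax sop.
Proof.
case: (fq_qax Q) => _ dQ iQ; split.
- move=> a; apply: injF_bij => x y /(congr1 val); rewrite !sopE.
  by move/qop_inj/val_inj.
- by move=> a b d; apply: val_inj; rewrite !sopE dQ.
- by move=> a; apply: val_inj; rewrite sopE iQ.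
Qed.

Definition subq : fq := fq_of sop_qax.

Lemma subq_iso : iso_sub subq A.
Proof.
exists (fun i => val (@enum_val sT predT i)); split.
- by move=> i j /val_inj /enum_val_inj.
- apply/setP => z; apply/imsetP/idP.
    by case=> i _ ->; exact: (valP (enum_val i)).
  move=> zA; exists (enum_rank (exist _ z zA : sT)); first by rewrite inE.
  by rewrite enum_rankK.
- by move=> a b; rewrite /qop /= code_ofE enum_rankK sopE.
Qed.

Lemma subq_size : qsize subq = #|A|.
Proof. by rewrite /qsize /= card_sig; apply: eq_card. Qed.
End Sub.

Lemma closed_subrack Q (S : {set 'I_(qsize Q)}) :
  (forall s z, s \in S -> z \in S -> qop Q s z \in S) -> subrack S.
Proof.
move=> h s sS; apply/eqP; rewrite eqEcard card_imset ?leqnn ?andbT; last exact: qop_inj.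
by apply/subsetP => _ /imsetP [z zS ->]; exact: h.
Qed.

Lemma decomp_nc Q : (0 < qsize Q)%N -> ~ connected Q ->
  exists S T, decomp Q S T /\ (qsize S < qsize Q)%N /\ (qsize T < qsize Q)%N.
Proof.
move=> n0 nc.
have [x [y nxy]] : exists x y, forall g, g \in Inn Q -> g x <> y.
  case: (asbP (exists x y, forall g, g \in Inn Q -> g x <> y)) => // H.
  exfalso; apply: nc; split => // x y.
  case: (asbP (exists2 g, g \in Inn Q & g x = y)) => // H2.
  by exfalso; apply: H; exists x, y => g gI e; apply: H2; exists g.
pose A := [set (g : {perm 'I_(qsize Q)}) x | g in Inn Q].
have lI s : lperm s \in Inn Q by rewrite /Inn mem_gen // imset_f.
have closA : forall s z, s \in A -> z \in A -> qop Q s z \in A.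
  move=> s z _ /imsetP [g gI ->]; apply/imsetP; exists (g * lperm s)%g.
    by move: gI (lI s); rewrite /Inn => gI ls; rewrite groupM.
  by rewrite permM /lperm permE.
have closB : forall s z, s \in ~: A -> z \in ~: A -> qop Q s z \in ~: A.
  move=> s z _; rewrite !inE; apply: contra => /imsetP [g gI e].
  apply/imsetP; exists (g * (lperm s)^-1)%g.
    by move: gI (lI s); rewrite /Inn => gI ls; rewrite groupM ?groupV.
  by rewrite permM -e -{1}[qop Q s z](permE (@qop_inj Q s)) permK.
exists (subq closA), (subq closB); split.
  exists A, (~: A); split; last by split; [exact: subq_iso|exact: subq_iso].
  split; [exact: closed_subrack|exact: closed_subrack| |exact: setUCr].
  by rewrite disjoints_subset setCK subxx.
have xA : x \in A by apply/imsetP; exists 1%g; [rewrite /Inn group1|rewrite perm1].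
have yB : y \in ~: A by rewrite inE; apply/negP => /imsetP [g gI e]; exact: nxy gI (esym e).
have := cardsC A; rewrite card_ord => e.
have h1 : (0 < #|A|)%N by apply/card_gt0P; exists x.
have h2 : (0 < #|~: A|)%N by apply/card_gt0P; exists y.
have l1 : (#|A| < #|A| + #|~: A|)%N by rewrite -[X in (X < _)%N]addn0 ltn_add2l.
have l2 : (#|~: A| < #|A| + #|~: A|)%N by rewrite -[X in (X < _)%N]add0n ltn_add2r.
rewrite e in l1 l2.
by rewrite !subq_size; split.
Qed.

Lemma brel0 : brel 0. Proof. by move=> P h0. Qed.
Lemma brelB y z : brel y -> brel z -> brel (y - z).
Proof. by move=> hy hz P h0 hB hg; apply hB; [exact: (hy P h0 hB hg)|exact: (hz P h0 hB hg)]. Qed.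
Lemma brel_gen g : bgen g -> brel g.
Proof. by move=> hg P h0 hB hG; apply: hG. Qed.
Lemma brelN y : brel y -> brel (- y).
Proof. by move=> hy; rewrite -sub0r; apply: brelB brel0 hy. Qed.
Lemma brelD y z : brel y -> brel z -> brel (y + z).
Proof. by move=> hy hz; rewrite -[z]opprK; apply: brelB hy (brelN hz). Qed.
Lemma brelMn y n : brel y -> brel (y *+ n).
Proof. by move=> hy; elim: n => [|n IH]; [rewrite mulr0n; exact: brel0|rewrite mulrS; exact: brelD]. Qed.
Lemma brelMz y (c : int) : brel y -> brel (y *~ c).
Proof.
move=> hy; case: c => n; first by rewrite -pmulrn; exact: brelMn.
by rewrite NegzE mulrNz; apply: brelN; rewrite -pmulrn; exact: brelMn.
Qed.
Lemma brel_sum (I : Type) (r : seq I) (P : pred I) (F : I -> FB) :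
  (forall i, P i -> brel (F i)) -> brel (\sum_(i <- r | P i) F i).
Proof. by move=> h; apply: big_ind; [exact: brel0|exact: brelD|exact: h]. Qed.
Lemma brel_iso X Y : qiso X Y -> brel (bsym X - bsym Y).
Proof. by move=> h; apply: brel_gen; left; exists X, Y. Qed.
Lemma brel_eq y z : y = z -> brel y -> brel z. Proof. by move=> ->. Qed.

Lemma bsymZ c X : << c *g X >> = bsym X *~ c :> FB.
Proof. by rewrite /bsym -(raddfMz (@mkmalgU fq int X)) intz. Qed.

Definition mlist (m : {cmonom Qpri}) : seq Qpri :=
  flatten [seq nseq (m i) i | i <- finsupp m].

Lemma count_mlist m j : count_mem j (mlist m) = m j.
Proof.
rewrite /mlist count_flatten -map_comp sumnE big_map /=.
under eq_bigr => i _ do rewrite count_nseq /=.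
have [jm|jm] := boolP (j \in finsupp m).
  rewrite (big_fsetD1 j) //= eqxx mul1n big1_fset ?addn0 // => i.
  by rewrite in_fsetD1 => /andP [/negbTE ne _] _; rewrite ne.
rewrite big1_fset; last by move=> i im _; case: eqP => // e; rewrite -e im in jm.
by move: jm; rewrite -cmE_eq0 => /eqP.
Qed.

Lemma perm_counts (s t : seq Qpri) : (forall j, count_mem j s = count_mem j t) -> perm_eq s t.
Proof. by move=> h; rewrite /perm_eq; apply/allP => j _ /=; rewrite h. Qed.

Definition mono (s : seq Qpri) : {cmonom Qpri} := foldr (fun (i : Qpri) (m : {cmonom Qpri}) => mmul (ucm i) m) (mone : {cmonom Qpri}) s.
Lemma mono_count s j : mono s j = count_mem j s.
Proof. by elim: s => [|i s IH] /=; rewrite ?cm1 // cmM cmU IH. Qed.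

Definition QM (m : {cmonom Qpri}) : fq := F (mlist m).

Lemma QM_mono s : qiso (QM (mono s)) (F s).
Proof. by apply: F_perm; apply: perm_counts => j; rewrite count_mlist mono_count. Qed.

Lemma QM_mul m1 m2 : qiso (QM (mmul m1 m2)) (qprod (QM m1) (QM m2)).
Proof.
apply: qiso_trans (F_cat _ _); apply: F_perm; apply: perm_counts => j.
by rewrite count_cat !count_mlist cmM.
Qed.

Definition phi (p : ZQpri) : FB := \sum_(m <- msupp p) << p@_m *g QM m >>.

Lemma phiEw (d : {fset {cmonom Qpri}}) p : (msupp p `<=` d)%fset ->
  phi p = \sum_(m <- d) << p@_m *g QM m >>.
Proof.
move=> le; rewrite /phi (big_fset_incl _ le) // => m _ mp.
by rewrite mcoeff_outdom // monalgU0.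
Qed.

Lemma phiD p q : phi (p + q) = phi p + phi q.
Proof.
rewrite (@phiEw (msupp p `|` msupp q)%fset) ?msuppD_le //.
rewrite (@phiEw (msupp p `|` msupp q)%fset p) ?fsubsetUl //.
rewrite (@phiEw (msupp p `|` msupp q)%fset q) ?fsubsetUr //.
by rewrite -big_split /=; apply: eq_bigr => m _; rewrite mcoeffD monalgUD.
Qed.

Lemma phi0 : phi 0 = 0.
Proof. by rewrite /phi msupp0 big_seq_fset0. Qed.

Lemma phiB : GRing.zmod_morphism phi.
Proof.
move=> p q; have e : phi (- q) = - phi q.
  by apply/eqP; rewrite -addr_eq0 -phiD addNr phi0.
by rewrite phiD e.
Qed.

HB.instance Definition _ := GRing.isZmodMorphism.Build ZQpri FB phi phiB.

Lemma phiU c m : phi << c *g m >> = << c *g QM m >>.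
Proof. by rewrite (@phiEw [fset m]%fset) ?msuppU_le // big_seq_fset1 mcoeffUU. Qed.

Lemma bmulEw (dx dy : {fset fq}) x y : (msupp x `<=` dx)%fset -> (msupp y `<=` dy)%fset ->
  bmul x y = \sum_(a <- dx) \sum_(b <- dy) << x@_a * y@_b *g qprod a b >>.
Proof.
move=> lx ly; rewrite /bmul (big_fset_incl _ lx); last first.
  move=> a _ ax; rewrite (big_fset_incl _ ly); last first.
    by move=> b _ _; rewrite mcoeff_outdom // mul0r monalgU0.
  by rewrite big1 // => b _; rewrite mcoeff_outdom // mul0r monalgU0.
apply: eq_bigr => a _; rewrite (big_fset_incl _ ly) // => b _ bx.
by rewrite (mcoeff_outdom bx) mulr0 monalgU0.
Qed.

Lemma bmulDl x x' y : bmul (x + x') y = bmul x y + bmul x' y.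
Proof.
rewrite (@bmulEw (msupp x `|` msupp x')%fset (msupp y)) ?msuppD_le //.
rewrite (@bmulEw (msupp x `|` msupp x')%fset (msupp y) x) ?fsubsetUl //.
rewrite (@bmulEw (msupp x `|` msupp x')%fset (msupp y) x') ?fsubsetUr //.
rewrite -big_split /=; apply: eq_bigr => a _; rewrite -big_split /=.
by apply: eq_bigr => b _; rewrite mcoeffD mulrDl monalgUD.
Qed.

Lemma bmulDr x y y' : bmul x (y + y') = bmul x y + bmul x y'.
Proof.
rewrite (@bmulEw (msupp x) (msupp y `|` msupp y')%fset) ?msuppD_le //.
rewrite (@bmulEw (msupp x) (msupp y `|` msupp y')%fset x y) ?fsubsetUl //.
rewrite (@bmulEw (msupp x) (msupp y `|` msupp y')%fset x y') ?fsubsetUr //.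
rewrite -big_split /=; apply: eq_bigr => a _; rewrite -big_split /=.
by apply: eq_bigr => b _; rewrite mcoeffD mulrDr monalgUD.
Qed.

Lemma bmul0l y : bmul 0 y = 0.
Proof. by rewrite /bmul msupp0 big_seq_fset0. Qed.
Lemma bmul0r x : bmul x 0 = 0.
Proof. by rewrite /bmul big1 // => a _; rewrite msupp0 big_seq_fset0. Qed.

Lemma bmulUU c d a b : bmul << c *g a >> << d *g b >> = << c * d *g qprod a b >>.
Proof.
rewrite (@bmulEw [fset a]%fset [fset b]%fset) ?msuppU_le //.
by rewrite !big_seq_fset1 !mcoeffUU.
Qed.
Lemma zid (V : zmodType) (a b c s t : V) : a + b - c = (a - s + (b - t)) - (c - s - t).
Proof.
rewrite !opprD !opprK addrACA.
rewrite subrK addrACA addNr addr0 addrAC. done. Qed.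

Lemma zid2 (V : zmodType) (x y z w : V) (k : int) : x *~ k + z - (y *~ k + w) = (x - y) *~ k + (z - w).
Proof. by rewrite mulrzBl opprD addrACA. Qed.


Lemma phiE p : phi p = \sum_(m <- msupp p) << p@_m *g QM m >>.
Proof. by []. Qed.

Lemma bmul_suml (I : Type) (r : seq I) (F : I -> FB) y :
  bmul (\sum_(i <- r) F i) y = \sum_(i <- r) bmul (F i) y.
Proof. by elim: r => [|i r IH]; rewrite ?big_nil ?bmul0l // !big_cons bmulDl IH. Qed.

Lemma bmul_sumr (I : Type) (r : seq I) (F : I -> FB) x :
  bmul x (\sum_(i <- r) F i) = \sum_(i <- r) bmul x (F i).
Proof. by elim: r => [|i r IH]; rewrite ?big_nil ?bmul0r // !big_cons bmulDr IH. Qed.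

Lemma phi_mul p q : brel (phi (p * q) - bmul (phi p) (phi q)).
Proof.
have ->: phi (p * q) = \sum_(m1 <- msupp p) \sum_(m2 <- msupp q)
    << p@_m1 * q@_m2 *g QM (mmul m1 m2) >>.
  by rewrite malgME raddf_sum; apply: eq_bigr => m1 _; rewrite raddf_sum;
     apply: eq_bigr => m2 _; exact: phiU.
have ->: bmul (phi p) (phi q) = \sum_(m1 <- msupp p) \sum_(m2 <- msupp q)
    << p@_m1 * q@_m2 *g qprod (QM m1) (QM m2) >>.
  rewrite (phiE p) (phiE q) bmul_suml; apply: eq_bigr => m1 _.
  by rewrite bmul_sumr; apply: eq_bigr => m2 _; exact: bmulUU.
rewrite -sumrB; apply: brel_sum => m1 _; rewrite -sumrB; apply: brel_sum => m2 _.
rewrite !bsymZ -mulrzBl; apply: brelMz; apply: brel_iso; exact: QM_mul.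
Qed.

Lemma decomp_empty Q : qsize Q = 0%N -> decomp Q Q Q.
Proof.
move=> e0.
have abs : forall z : 'I_(qsize Q), False.
  by move=> z; have : (val z < 0)%N by rewrite -e0 ltn_ord.
exists set0, set0; split; last by split; exists id; split => //;
  apply/setP => z; case: (abs z).
split.
- by move=> s; rewrite inE.
- by move=> s; rewrite inE.
- by rewrite disjoints_subset sub0set.
- by apply/setP => z; case: (abs z).
Qed.

Lemma surj1 n : forall Q, (qsize Q <= n)%N -> exists p, beq (phi p) (bsym Q).
Proof.
elim: n => [|n IH] Q leQ.
  have e0 : qsize Q = 0%N by apply/eqP; rewrite -leqn0.
  exists 0; rewrite /beq phi0.
  apply: brel_eq (brel_gen _); last by right; exists Q, Q, Q; split => //; exact: decomp_empty.
  by rewrite subrr !sub0r.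
have [e0|pos] := posnP (qsize Q).
  by apply: IH; rewrite e0.
case: (asbP (connected Q)) => [cQ|nc].
  have [s hs] := conn_F (leqnn _) cQ.
  exists << 1 *g mono s >>; rewrite /beq phiU.
  apply: brel_iso; apply: qiso_trans (QM_mono s) (qiso_sym hs).
have [S [T [dQ [ltS ltT]]]] := decomp_nc pos nc.
have [pS hS] := IH S (ltnSE (leq_trans ltS leQ)).
have [pT hT] := IH T (ltnSE (leq_trans ltT leQ)).
exists (pS + pT); rewrite /beq phiD.
have g : brel (bsym Q - bsym S - bsym T) by apply: brel_gen; right; exists Q, S, T.
apply: brel_eq (brelB (brelD hS hT) g).
by rewrite [RHS](zid _ _ _ (bsym S) (bsym T)).
Qed.

Lemma surj_sum (r : seq fq) (c : fq -> int) :
  exists p, beq (phi p) (\sum_(a <- r) << c a *g a >>).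
Proof.
elim: r => [|a r [pr hr]].
  by exists 0; rewrite /beq phi0 big_nil subrr; exact: brel0.
have [pa ha] := surj1 (leqnn (qsize a)).
exists (pa *~ c a + pr); rewrite /beq phiD raddfMz big_cons bsymZ.
apply: brel_eq (brelD (brelMz (c a) ha) hr).
by rewrite [RHS]zid2.
Qed.

Theorem theorem7p9 :
  exists phi : ZQpri -> FB,
    [/\ (forall p q, beq (phi (p + q)) (phi p + phi q)),
        (forall p q, beq (phi (p * q)) (bmul (phi p) (phi q))),
        beq (phi 1) (bsym qpt),
        (forall i : Qpri, beq (phi (var i)) (bsym (val i)))
      & (forall x : FB, exists p : ZQpri, beq (phi p) x)].
Proof.
exists phi; split.
- by move=> p q; rewrite /beq phiD subrr; exact: brel0.
- exact: phi_mul.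
- rewrite /beq.
  have -> : (1 : ZQpri) = << 1 *g mone >> by [].
  rewrite phiU; apply: brel_iso.
  apply: qiso_trans (QM_mono [::]) _; exact: qiso_refl.
- move=> i; rewrite /beq /var phiU; apply: brel_iso.
  have h : ucm i = mono [:: i].
    apply/eqP/cmP => j; apply: eq_trans (cmU i j) (esym (eq_trans (mono_count [:: i] j) _)).
    change ((pred1 j i) + 0 = (i == j))%N; exact: addn0.
  rewrite h; apply: qiso_trans (QM_mono [:: i]) _.
  have e : F [:: i] = qprod (val i) qpt by [].
  rewrite e; exact: qprod_unit.
- move=> x; rewrite [in X in exists p, beq _ X](monalgE x); exact: surj_sum.
Qed.
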